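(* Let $\mathbb{F}$ be a field of characteristic different from $2$ and $G\leq\mathrm{GL}_n(\mathbb{F})$ a reflection group acting on $V=\mathbb{F}^n$. If $\omega_1,\dots,\omega_n$ are $G$-invariant differential $1$-forms, then $Q(\tilde{\mathcal A})\,Q_{\det}$ divides $\omega_1\wedge\cdots\wedge\omega_n$, i.e. $\omega_1\wedge\cdots\wedge\omega_n=f\,dz_1\wedge\cdots\wedge dz_n$ with $f\in\mathbb{F}[V]$ divisible by $Q(\tilde{\mathcal A})\,Q_{\det}$.
   Context: $\mathbb{F}[V]=S(V^* )$; $z_1,\dots,z_n$ is a basis of $V^*$; $\Omega^1=\mathbb{F}[V]\otimes V^*$ and $\Omega^n=\mathbb{F}[V]\,dz_1\wedge\cdots\wedge dz_n$, with $G$ acting on $V^*$ by $(gf)(v)=f(g^{-1}v)$ and diagonally on forms. A reflection is a finite-order element of $\mathrm{GL}(V)$ whose fixed space is a hyperplane; a reflection group is a finite group generated by reflections. For a hyperplane $H$ with defining linear form $l_H$, a reflection $s$ about $H$ satisfies $s(v)=v+l_H(v)\alpha_s$ (root vector $\alpha_s$); it is a transvection if $\alpha_s\in H$. $\mathcal A$ is the set of reflecting hyperplanes of reflections in $G$. For $H\in\mathcal A$: $G_H$ is the pointwise stabilizer of $H$ in $G$, $K_H=\ker(\det|_{G_H})$, $e_H=|G_H:K_H|$, and $b_H$ is the dimension of the span of the root vectors of transvections in $G_H$. Define $Q_{\det}=\prod_{H\in\mathcal A}l_H^{e_H-1}$ and $Q(\tilde{\mathcal A})=\prod_{H\in\mathcal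 A}l_H^{e_Hb_H}$. *)

(* Defs.v *)
From HB Require Import structures.
From mathcomp Require Import all_boot all_order all_algebra all_fingroup.
From mathcomp Require Import mxrepresentation.
From mathcomp Require Import mpoly.
Set Implicit Arguments. Unset Strict Implicit. Unset Printing Implicit Defensive.
Import GRing.Theory.
Local Open Scope ring_scope.

(* Conventions.  V = F^n is realised as row vectors 'rV[F]_n; a matrix
   M : 'M[F]_n acts on V by v |-> v *m M.  F[V] = {mpoly F[n]}, with
   z_i = 'X_i the i-th coordinate function. *)

Section Defs.
Variables (F : fieldType) (n : nat).

Definition lin_poly (u : 'cV[F]_n) : {mpoly F[n]} :=
  \sum_(j < n) u j 0 *: 'X_j.

(* (g f)(v) = f(g^{-1} v) : substitute z_i |-> z_i o g^{-1} *)
Definition act_poly (M : 'M[F]_n) (p : {mpoly F[n]}) : {mpoly F[n]} :=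
  p \mPo [tuple lin_poly (col i (invmx M)) | i < n].

(* 1-forms: omega = sum_i omega_i dz_i, stored as the row of coefficients *)
Definition form1 := 'rV[{mpoly F[n]}]_n.

(* diagonal action: g(sum_i a_i dz_i) = sum_i (g a_i) d(g z_i),
   with d(g z_i) = sum_j (g^{-1})_{j i} dz_j *)
Definition act_form (M : 'M[F]_n) (w : form1) : form1 :=
  \row_j \sum_(i < n) act_poly M (w 0 i) * (invmx M j i)%:MP.

(* omega_1 /\ ... /\ omega_n = wedge_coef omega * dz_1 /\ ... /\ dz_n *)
Definition wedge_coef (w : 'I_n -> form1) : {mpoly F[n]} :=
  \det (\matrix_(k < n, i < n) w k 0 i).

Definition mdvd (p q : {mpoly F[n]}) : Prop := exists r, q = r * p.

(* reflection (for an element of a finite group, where finite order is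
   automatic): the fixed space {v | v *m M = v} = kernel of M - 1 is a
   hyperplane, i.e. M - 1 has rank 1 *)
Definition is_reflection (M : 'M[F]_n) : bool := \rank (M - 1%:M) == 1%N.

Definition fixspace (M : 'M[F]_n) : 'M[F]_n := kermx (M - 1%:M).

(* transvection: reflection whose root vector (spanning the image of M - 1)
   lies in the reflecting hyperplane *)
Definition is_transvection (M : 'M[F]_n) : bool :=
  is_reflection M && (M - 1%:M <= fixspace M)%MS.

Variables (gT : finGroupType) (G : {group gT}) (rG : mx_representation F G n).

Definition reflections : {set gT} :=
  [set g in G | is_reflection (rG g)].

(* the set A of reflecting hyperplanes, each represented by the canonical
   square matrix <<H>> whose row space is H *)
Definition hyperplanes : seq 'M[F]_n :=
  undup [seq <<fixspace (rG g)>>%MS | g <- enum reflections].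

Definition ptstab (H : 'M[F]_n) : {set gT} :=
  [set g in G | H *m rG g == H].
Definition ptstab_det1 (H : 'M[F]_n) : {set gT} :=
  [set g in ptstab H | \det (rG g) == 1].
Definition e_H (H : 'M[F]_n) : nat := (#|ptstab H : ptstab_det1 H|)%g.
Definition b_H (H : 'M[F]_n) : nat :=
  \rank (\sum_(g in ptstab H | is_transvection (rG g)) (rG g - 1%:M))%MS.

Definition Q_det (l : 'M[F]_n -> 'cV[F]_n) : {mpoly F[n]} :=
  \prod_(H <- hyperplanes) lin_poly (l H) ^+ (e_H H).-1.
Definition Q_tA (l : 'M[F]_n -> 'cV[F]_n) : {mpoly F[n]} :=
  \prod_(H <- hyperplanes) lin_poly (l H) ^+ (e_H H * b_H H).

End Defs.

(* Main.v *)
Require Import Defs.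
From HB Require Import structures.
From mathcomp Require Import all_boot all_order all_algebra all_fingroup.
From mathcomp Require Import mxrepresentation.
From mathcomp Require Import mpoly.
From mathcomp Require Import ring zify.
Set Implicit Arguments. Unset Strict Implicit. Unset Printing Implicit Defensive.
Import GRing.Theory.
Local Open Scope ring_scope.
Section PolyAux.
Variables (F : fieldType) (n : nat).
Local Notation P := {mpoly F[n]}.
Implicit Types (p q d : P).

Lemma mdvd0 d : mdvd d 0. Proof. by exists 0; rewrite mul0r. Qed.
Lemma mdvdD d p q : mdvd d p -> mdvd d q -> mdvd d (p + q).
Proof. by move=> [r ->] [s ->]; exists (r + s); rewrite mulrDl. Qed.
Lemma mdvdN d p : mdvd d p -> mdvd d (- p).
Proof. by move=> [r ->]; exists (- r); rewrite mulNr. Qed.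
Lemma mdvdB d p q : mdvd d p -> mdvd d q -> mdvd d (p - q).
Proof. by move=> hp hq; apply: mdvdD => //; apply: mdvdN. Qed.
Lemma mdvdMl d p q : mdvd d p -> mdvd d (q * p).
Proof. by move=> [r ->]; exists (q * r); rewrite mulrA. Qed.
Lemma mdvdMr d p q : mdvd d p -> mdvd d (p * q).
Proof. by move=> h; rewrite mulrC; apply: mdvdMl. Qed.
Lemma mdvdZ d p c : mdvd d p -> mdvd d (c *: p).
Proof. by move=> h; rewrite -mul_mpolyC; apply: mdvdMl. Qed.
Lemma mdvd_refl d : mdvd d d. Proof. by exists 1; rewrite mul1r. Qed.
Lemma mdvd_trans d e p : mdvd d e -> mdvd e p -> mdvd d p.
Proof. by move=> [r ->] [s ->]; exists (s * r); rewrite mulrA. Qed.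
Lemma mdvd_sum (I : Type) (r : seq I) (Pr : pred I) (f : I -> P) d :
  (forall i, Pr i -> mdvd d (f i)) -> mdvd d (\sum_(i <- r | Pr i) f i).
Proof.
move=> h; apply: (big_ind (fun x => mdvd d x)) => //; first exact: mdvd0.
exact: mdvdD.
Qed.

Lemma comp_dvd (lq : n.-tuple P) d :
  (forall i : 'I_n, mdvd d (tnth lq i - 'X_i)) ->
  forall p, mdvd d (p \mPo lq - p).
Proof.
move=> hX; have hM : forall p q, mdvd d (p \mPo lq - p) -> mdvd d (q \mPo lq - q)
    -> mdvd d ((p * q) \mPo lq - p * q).
  move=> p q hp hq; rewrite (rmorphM (comp_mpoly lq)) /=.
  set a := p \mPo lq; set b := q \mPo lq.
  have -> : a * b - p * q = (a - p) * b + p * (b - q) by ring.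
  by apply: mdvdD; [apply: mdvdMr | apply: mdvdMl].
have h1 : mdvd d (1 \mPo lq - 1) by rewrite comp_mpoly1 subrr; apply: mdvd0.
have hXe : forall (i : 'I_n) k, mdvd d (('X_i ^+ k) \mPo lq - 'X_i ^+ k).
  move=> i; elim=> [|k ih]; first by rewrite expr0.
  rewrite exprS; apply: hM => //; rewrite comp_mpolyXU -tnth_nth; exact: hX.
elim/mpolyind => [|c m p _ _ ih]; first by rewrite comp_mpoly0 subrr; apply: mdvd0.
rewrite raddfD /= comp_mpolyZ.
set a := 'X_[m] \mPo lq; set b := p \mPo lq.
have -> : c *: a + b - (c *: 'X_[m] + p) = c *: (a - 'X_[m]) + (b - p).
  by rewrite scalerBr opprD !addrA; congr (_ + _); rewrite addrAC.
rewrite {}/a {}/b; apply: mdvdD => //; apply: mdvdZ.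
rewrite mpolyXE_id.
elim/big_rec: _ => [|i x _ hx] //; exact: hM.
Qed.


Lemma lin_polyD (u v : 'cV[F]_n) : lin_poly (u + v) = lin_poly u + lin_poly v.
Proof. by rewrite /lin_poly -big_split; apply: eq_bigr => j _; rewrite mxE scalerDl. Qed.
Lemma lin_polyZ c (u : 'cV[F]_n) : lin_poly (c *: u) = c *: lin_poly u.
Proof. by rewrite /lin_poly scaler_sumr; apply: eq_bigr => j _; rewrite mxE scalerA. Qed.
Lemma lin_poly0 : lin_poly (0 : 'cV[F]_n) = 0.
Proof. by rewrite /lin_poly big1 // => j _; rewrite mxE scale0r. Qed.
Lemma lin_polyN (u : 'cV[F]_n) : lin_poly (- u) = - lin_poly u.
Proof. by rewrite -scaleN1r lin_polyZ scaleN1r. Qed.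
Lemma lin_polyB (u v : 'cV[F]_n) : lin_poly (u - v) = lin_poly u - lin_poly v.
Proof. by rewrite lin_polyD lin_polyN. Qed.
Lemma lin_poly_sum (I : Type) (r : seq I) (Pr : pred I) (f : I -> 'cV[F]_n) :
  lin_poly (\sum_(i <- r | Pr i) f i) = \sum_(i <- r | Pr i) lin_poly (f i).
Proof.
elim/big_rec2: _ => [|i a b _ <-]; [exact: lin_poly0 | exact: lin_polyD].
Qed.

Lemma mcoeff_lin (u : 'cV[F]_n) j : (lin_poly u)@_(U_(j)) = u j 0.
Proof.
rewrite /lin_poly raddf_sum (bigD1 j) //= big1 ?addr0.
  by rewrite mcoeffZ mcoeffXU eqxx mulr1.
by move=> i hij; rewrite mcoeffZ mcoeffXU (negbTE hij) mulr0.
Qed.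

Lemma lin_poly_inj (u v : 'cV[F]_n) : lin_poly u = lin_poly v -> u = v.
Proof.
move=> h; apply/matrixP => i k; rewrite (ord1 k).
by rewrite -!mcoeff_lin h.
Qed.

Lemma lin_poly_eq0 (u : 'cV[F]_n) : (lin_poly u == 0) = (u == 0).
Proof.
apply/eqP/eqP => [h|->]; last exact: lin_poly0.
by apply: lin_poly_inj; rewrite h lin_poly0.
Qed.

Lemma mulmx_col_sum (A : 'M[F]_n) (v : 'cV[F]_n) :
  A *m v = \sum_(j < n) v j 0 *: col j A.
Proof.
apply/matrixP => i k; rewrite (ord1 k) mxE summxE.
by apply: eq_bigr => j _; rewrite !mxE mulrC.
Qed.

Lemma comp_lin (t : n.-tuple P) (v : 'cV[F]_n) :
  lin_poly v \mPo t = \sum_(j < n) v j 0 *: tnth t j.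
Proof.
rewrite /lin_poly raddf_sum; apply: eq_bigr => j _.
by rewrite /= comp_mpolyZ comp_mpolyXU -tnth_nth.
Qed.

Lemma act_lin (M : 'M[F]_n) (v : 'cV[F]_n) :
  act_poly M (lin_poly v) = lin_poly (invmx M *m v).
Proof.
rewrite /act_poly comp_lin mulmx_col_sum lin_poly_sum.
by apply: eq_bigr => j _; rewrite tnth_mktuple lin_polyZ.
Qed.

Lemma act_polyC (M : 'M[F]_n) c : act_poly M c%:MP = c%:MP.
Proof. exact: comp_mpolyC. Qed.
Lemma act_polyM (M : 'M[F]_n) p q : act_poly M (p * q) = act_poly M p * act_poly M q.
Proof. exact: (rmorphM (comp_mpoly _)). Qed.
Lemma act_polyD (M : 'M[F]_n) p q : act_poly M (p + q) = act_poly M p + act_poly M q.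
Proof. exact: raddfD. Qed.
Lemma act_polyB (M : 'M[F]_n) p q : act_poly M (p - q) = act_poly M p - act_poly M q.
Proof. exact: raddfB. Qed.
Lemma act_polyZ (M : 'M[F]_n) c p : act_poly M (c *: p) = c *: act_poly M p.
Proof. exact: comp_mpolyZ. Qed.
Lemma act_polyX (M : 'M[F]_n) p k : act_poly M (p ^+ k) = act_poly M p ^+ k.
Proof. exact: (rmorphXn (comp_mpoly _)). Qed.

Section Prime.
Variables (u : 'cV[F]_n) (j0 : 'I_n).
Hypothesis uj0 : u j0 0 != 0.
Local Notation l := (lin_poly u).

Definition phiT : n.-tuple P :=
  [tuple (if i == j0 then 'X_i - (u j0 0)^-1 *: l else 'X_i) | i < n].

Lemma phi_lin v : lin_poly v \mPo phiT = lin_poly (v - (v j0 0 / u j0 0) *: u).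
Proof.
rewrite comp_lin lin_polyB lin_polyZ /lin_poly (bigD1 j0) //= [X in _ = X - _](bigD1 j0) //=.
rewrite tnth_mktuple eqxx.
rewrite (eq_bigr (fun i => v i 0 *: 'X_i)); last first.
  by move=> i hi; rewrite tnth_mktuple (negbTE hi).
rewrite scalerBr scalerA -/(lin_poly u) -/(lin_poly u).
rewrite /lin_poly; set S := \sum_(i < n | i != j0) _.
by rewrite mulrC; rewrite [_ + S - _]addrAC.
Qed.

Lemma phi_l : l \mPo phiT = 0.
Proof. by rewrite phi_lin divff // scale1r subrr lin_poly0. Qed.

Lemma phi_dvd p : mdvd l p <-> p \mPo phiT = 0.
Proof.
split => [[r ->]|h].
  by rewrite (rmorphM (comp_mpoly _)) /= phi_l mulr0.
have := comp_dvd (d := l) (lq := phiT) _ p; rewrite h sub0r.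
move/(_ _)/mdvdN; rewrite opprK; apply => i.
rewrite tnth_mktuple; case: eqP => _; last by rewrite subrr; exact: mdvd0.
rewrite addrAC subrr add0r; apply/mdvdN/mdvdZ/mdvd_refl.
Qed.

Lemma lin_prime p q : mdvd l (p * q) -> mdvd l p \/ mdvd l q.
Proof.
rewrite !phi_dvd (rmorphM (comp_mpoly _)) /= => /eqP.
by rewrite mulf_eq0 => /orP [/eqP -> | /eqP ->]; [left|right].
Qed.

End Prime.


Lemma col_nz (u : 'cV[F]_n) : u != 0 -> exists j0, u j0 0 != 0.
Proof.
move=> hu; apply/existsP; apply: contraR hu; rewrite negb_exists => /forallP h.
apply/eqP/matrixP => i k; rewrite (ord1 k) mxE; exact/eqP/negPn/h.
Qed.

Lemma mdvd_cancel p q r : p != 0 -> mdvd (p * q) (p * r) -> mdvd q r.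
Proof.
move=> hp [s]; rewrite mulrCA => /(mulfI hp) ->; exists s => //.
Qed.

Lemma dvd_pow_coprime (u : 'cV[F]_n) j0 (uj0 : u j0 0 != 0) (Q r : P) k :
  Q \mPo phiT u j0 != 0 -> mdvd (lin_poly u ^+ k) (Q * r) ->
  mdvd (lin_poly u ^+ k) r.
Proof.
have lnz : lin_poly u != 0.
  rewrite lin_poly_eq0; apply: contraNneq uj0 => ->; by rewrite mxE.
move=> hQ; elim: k r => [|k ih] r.
  by move=> _; exists r; rewrite expr0 mulr1.
move=> h; have : mdvd (lin_poly u ^+ k) (Q * r).
  by apply: mdvd_trans h; exists (lin_poly u); rewrite exprS mulrC.
move/ih => [r1 hr1]; move: h; rewrite hr1 exprS mulrA => h.
have : mdvd (lin_poly u ^+ k * lin_poly u) (lin_poly u ^+ k * (Q * r1)).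
  case: h => s hs; exists s; transitivity (Q * r1 * lin_poly u ^+ k); first ring.
  by rewrite hs; ring.
move/(mdvd_cancel (expf_neq0 k lnz)).
case/(lin_prime uj0) => h1.
  by move/(phi_dvd uj0): h1 => h1; rewrite h1 eqxx in hQ.
by case: h1 => r2 ->; exists r2; ring.
Qed.

Lemma prod_dvd (T : eqType) (s : seq T) (L : T -> 'cV[F]_n) (k : T -> nat) (f : P) :
  uniq s -> (forall H, H \in s -> L H != 0) ->
  (forall H H', H \in s -> H' \in s -> H != H' -> forall c, L H' != c *: L H) ->
  (forall H, H \in s -> mdvd (lin_poly (L H) ^+ k H) f) ->
  mdvd (\prod_(H <- s) lin_poly (L H) ^+ k H) f.
Proof.
elim: s => [|H s ih] /=; first by move=> *; exists f; rewrite big_nil mulr1.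
case/andP => Hs us hnz hnp hd; rewrite big_cons.
have [r hr] : mdvd (\prod_(H0 <- s) lin_poly (L H0) ^+ k H0) f.
  apply: ih => // [H0 h0|H0 H1 h0 h1|H0 h0].
  - by apply: hnz; rewrite inE h0 orbT.
  - by apply: hnp; rewrite inE ?h0 ?h1 orbT.
  - by apply: hd; rewrite inE h0 orbT.
have [j0 uj0] := col_nz (hnz H (mem_head _ _)).
have : mdvd (lin_poly (L H) ^+ k H) r.
  apply: (dvd_pow_coprime uj0 (Q := \prod_(H0 <- s) lin_poly (L H0) ^+ k H0)).
    rewrite (rmorph_prod (comp_mpoly _)) /=; rewrite prodf_seq_neq0; apply/allP => H0 h0 /=.
    rewrite (rmorphXn (comp_mpoly _)) /= expf_neq0 // phi_lin lin_poly_eq0 subr_eq0.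
    apply: hnp; rewrite ?inE ?h0 ?orbT ?eqxx //.
    by apply: contraNneq Hs => ->.
  by rewrite mulrC -hr; apply: hd; exact: mem_head.
by case=> r1 hr1; rewrite hr hr1; exists r1; ring.
Qed.

End PolyAux.

Section MxAux.
Variables (F : fieldType) (n : nat).

Lemma ker_factor (u : 'cV[F]_n) (B : 'M[F]_n) :
  (kermx u <= kermx B)%MS -> exists w : 'rV[F]_n, B = u *m w.
Proof.
move=> hk.
have hC : (kermx (row_mx u B) == kermx u)%MS.
  apply/andP; split.
  - apply/sub_kermxP; have := mulmx_ker (row_mx u B); rewrite mul_mx_row.
    by rewrite -row_mx0 => /eq_row_mx [-> _].
  - apply/sub_kermxP; rewrite mul_mx_row mulmx_ker (sub_kermxP hk) row_mx0 //.
have hr : \rank (row_mx u B) = \rank u.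
  have := mxrank_ker (row_mx u B); rewrite (eqmx_rank hC) mxrank_ker.
  have := rank_leq_row (row_mx u B); have := rank_leq_row u; lia.
have hs : (u^T <= u^T + B^T)%MS by apply: addsmxSl.
have e : \rank (u^T + B^T)%MS = \rank u^T.
  by rewrite addsmxE -tr_row_mx !mxrank_tr hr.
have h : (u^T + B^T <= u^T)%MS by rewrite -(geq_leqif (mxrank_leqif_sup hs)) e.
have : (B^T <= u^T)%MS by apply: submx_trans (addsmxSr _ _) h.
case/submxP => D hD; exists D^T.
by rewrite -[B]trmxK hD trmx_mul trmxK.
Qed.

Lemma det_rank1 (u : 'cV[F]_n) (w : 'rV[F]_n) :
  \det (1%:M + u *m w) = 1 + (w *m u) 0 0.
Proof.
set M := block_mx (1%:M : 'M_n) (- u) w (1%:M : 'M_1).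
have e1 : M = block_mx 1%:M 0 w 1%:M *m block_mx 1%:M (- u) 0 (1%:M + w *m u).
  rewrite mulmx_block !mul1mx !mul0mx !mulmx1 !addr0.
  by rewrite mulmxN addrCA addNr addr0.
have e2 : M = block_mx (1%:M + u *m w) (- u) 0 1%:M *m block_mx 1%:M 0 w 1%:M.
  rewrite mulmx_block !mul1mx !mul0mx !mulmx1 !mulmx0 ?addr0 ?add0r.
  by rewrite mulNmx addrK.
have := congr1 determinant e1; rewrite e2 !det_mulmx !det_lblock !det_ublock.
rewrite !det1 !mul1r !mulr1 => ->.
by rewrite det_mx11 !mxE eqxx mulr1n.
Qed.

End MxAux.

Lemma lin_dvd (F : fieldType) (n : nat) c (u : 'cV[F]_n) :
  mdvd (lin_poly u) (lin_poly (c *: u)).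
Proof. by rewrite lin_polyZ; apply/mdvdZ/mdvd_refl. Qed.

Section Local.
Variables (F : fieldType) (n : nat) (u : 'cV[F]_n) (M : 'M[F]_n).
Hypotheses (hM : M \in unitmx) (hk : (kermx u <= kermx (M - 1%:M))%MS).

Lemma local_struct : exists w : 'rV[F]_n,
  [/\ M = 1%:M + u *m w, \det M = 1 + (w *m u) 0 0,
      invmx M *m u = (\det M)^-1 *: u &
      invmx M - 1%:M = - ((\det M)^-1 *: (u *m w))].
Proof.
have [w hw] := ker_factor hk.
have eM : M = 1%:M + u *m w by rewrite -hw addrC subrK.
have hd : \det M = 1 + (w *m u) 0 0 by rewrite eM det_rank1.
have dnz : \det M != 0 by rewrite -unitfE -unitmxE.
have Mu : M *m u = \det M *: u.
  rewrite {1}eM mulmxDl mul1mx -mulmxA [w *m u]mx11_scalar mul_mx_scalar.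
  by rewrite hd scalerDl scale1r.
have iu : invmx M *m u = (\det M)^-1 *: u.
  have := congr1 (mulmx (invmx M)) Mu; rewrite mulKmx // -scalemxAr => /(congr1 (fun A => (\det M)^-1 *: A)) /=.
  by rewrite scalerA mulVf // scale1r => <-.
exists w; split => //.
have -> : invmx M - 1%:M = invmx M *m (1%:M - M).
  by rewrite mulmxBr mulmx1 mulVmx.
by rewrite -opprB hw mulmxN mulmxA iu scalemxAl.
Qed.

Lemma act_l : act_poly M (lin_poly u) = (\det M)^-1 *: lin_poly u.
Proof.
have [w [_ _ iu _]] := local_struct.
by rewrite act_lin iu lin_polyZ.
Qed.

Lemma X_lin (i : 'I_n) : 'X_i = lin_poly (col i (1%:M : 'M[F]_n)) :> {mpoly F[n]}.
Proof.
rewrite /lin_poly (bigD1 i) //= big1 ?addr0 ?mxE ?eqxx ?scale1r //.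
by move=> j hj; rewrite !mxE (negbTE hj) scale0r.
Qed.

Lemma act_dvd p : mdvd (lin_poly u) (act_poly M p - p).
Proof.
have [w [_ _ _ im]] := local_struct.
apply: comp_dvd => i; rewrite tnth_mktuple X_lin -lin_polyB.
have -> : col i (invmx M) - col i 1%:M = (- ((\det M)^-1 * w 0 i)) *: u.
  apply/matrixP => k z; have := congr1 (fun A : 'M[F]_n => A k i) im.
  move=> /= h; rewrite !mxE in h; rewrite !mxE h big_ord1 (ord1 z); ring.
exact: lin_dvd.
Qed.

End Local.

Lemma act_sum (F : fieldType) (n : nat) (M : 'M[F]_n) (I : Type) (r : seq I)
  (Pr : pred I) (f : I -> {mpoly F[n]}) :
  act_poly M (\sum_(i <- r | Pr i) f i) = \sum_(i <- r | Pr i) act_poly M (f i).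
Proof.
elim/big_rec2: _ => [|i a b _ <-]; [exact: comp_mpoly0 | exact: act_polyD].
Qed.

Section Step.
Variables (F : fieldType) (n : nat) (u : 'cV[F]_n) (M : 'M[F]_n).
Hypotheses (hM : M \in unitmx) (hk : (kermx u <= kermx (M - 1%:M))%MS)
  (unz : u != 0).
Local Notation l := (lin_poly u).

Lemma step (p : {mpoly F[n]}) c k : act_poly M p = c *: p ->
  mdvd (l ^+ k) p -> ((\det M)^-1 ^+ k != c) -> mdvd (l ^+ k.+1) p.
Proof.
move=> hp [q hq] hne.
have lnz : l != 0 by rewrite lin_poly_eq0.
have [s hs] := act_dvd hM hk q.
set dl := (\det M)^-1 ^+ k.
have e1 : act_poly M p = (dl%:MP * (q + s * l)) * l ^+ k.
  rewrite hq act_polyM act_polyX act_l // exprZn -scalerAr -mul_mpolyC.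
  by rewrite -[act_poly M q](subrK q) hs; ring.
have e2 : (c%:MP * q) * l ^+ k = (dl%:MP * (q + s * l)) * l ^+ k.
  by rewrite -e1 hp hq -mul_mpolyC mulrA.
have e3 := mulIf (expf_neq0 k lnz) e2.
have cd : c - dl != 0 by rewrite subr_eq0 eq_sym.
exists (((c - dl)^-1 * dl)%:MP * s); rewrite hq exprS.
have : ((c - dl)%:MP * q) = dl%:MP * (s * l).
  by rewrite rmorphB /= mulrBl e3; ring.
move/(congr1 (fun x => (c - dl)^-1%:MP * x)).
rewrite [X in X = _]mulrA -rmorphM /= mulVf // mpolyC1 mul1r => ->.
by rewrite mulrA; ring.
Qed.

End Step.

Lemma iter_dvd (F : fieldType) (n : nat) (l p : {mpoly F[n]}) (a b : nat) :
  (a <= b)%N -> (forall k, (a <= k < b)%N -> mdvd (l ^+ k) p -> mdvd (l ^+ k.+1) p) ->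
  mdvd (l ^+ a) p -> mdvd (l ^+ b) p.
Proof.
move=> hab hs ha; elim: b hab hs => [|b ih] hab hs.
  by rewrite leqn0 in hab; move/eqP: hab => <-.
case: (ltnP a b.+1) => h.
  have h' : (a <= b)%N by rewrite -ltnS.
  apply: (hs); first by rewrite h' leqnn.
  apply: (ih h') => k /andP [k1 k2]; apply: (hs); rewrite k1 /=; exact: ltnW.
by have -> : b.+1 = a by apply/eqP; rewrite eqn_leq hab h.
Qed.

Section Omega.
Variables (F : fieldType) (n : nat) (omega : 'I_n -> form1 F n).

Definition om k (x : 'rV[F]_n) : {mpoly F[n]} :=
  \sum_(i < n) omega k 0 i * (x 0 i)%:MP.

Definition Wmx : 'M[{mpoly F[n]}]_n := \matrix_(k < n, i < n) omega k 0 i.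

Lemma omD k x y : om k (x + y) = om k x + om k y.
Proof. by rewrite /om -big_split; apply: eq_bigr => i _; rewrite mxE rmorphD mulrDr. Qed.
Lemma omZ k c x : om k (c *: x) = c *: om k x.
Proof.
rewrite /om scaler_sumr; apply: eq_bigr => i _; rewrite mxE rmorphM /=.
by rewrite -mul_mpolyC; ring.
Qed.
Lemma om0 k : om k 0 = 0.
Proof. by rewrite /om big1 // => i _; rewrite mxE mpolyC0 mulr0. Qed.
Lemma omB k x y : om k (x - y) = om k x - om k y.
Proof. by rewrite -scaleN1r omD omZ scaleN1r. Qed.
Lemma om_sum k (I : Type) (r : seq I) (Pr : pred I) (f : I -> 'rV[F]_n) :
  om k (\sum_(i <- r | Pr i) f i) = \sum_(i <- r | Pr i) om k (f i).
Proof.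
elim/big_rec2: _ => [|i a b _ <-]; [exact: om0 | exact: omD].
Qed.

Section Inv.
Variable (M : 'M[F]_n).
Hypotheses (hM : M \in unitmx) (hinv : forall k, act_form M (omega k) = omega k).

Lemma om_eq k j : omega k 0 j = \sum_(i < n) act_poly M (omega k 0 i) * (invmx M j i)%:MP.
Proof. by rewrite -{1}hinv mxE. Qed.

Lemma om_act k x : act_poly M (om k x) = om k (x *m M).
Proof.
rewrite /om act_sum.
under [RHS]eq_bigr => j _ do rewrite om_eq mulr_suml.
rewrite exchange_big /=; apply: eq_bigr => i _.
rewrite act_polyM act_polyC.
under eq_bigr => j _ do rewrite -mulrA -rmorphM /=.
rewrite -mulr_sumr -rmorph_sum /=; congr (_ * (_)%:MP).
have := congr1 (fun A : 'rV[F]_n => A 0 i) (mulmxK hM x).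
by rewrite mxE => <-; apply: eq_bigr => j _; rewrite mulrC.
Qed.

Lemma wedge_semi : act_poly M (wedge_coef omega) = \det M *: wedge_coef omega.
Proof.
have eW : Wmx = map_mx (act_poly M) Wmx *m (map_mx (@mpolyC n F) (invmx M))^T.
  apply/matrixP => k j; rewrite !mxE om_eq; apply: eq_bigr => i _.
  by rewrite !mxE.
have := congr1 determinant eW; rewrite det_mulmx det_tr.
rewrite (det_map_mx (comp_mpoly _)) (det_map_mx (@mpolyC n F)) det_inv.
rewrite /wedge_coef -/Wmx => /(congr1 (fun x => (\det M)%:MP * x)).
have dnz : \det M != 0 by rewrite -unitfE -unitmxE.
rewrite mul_mpolyC => ->.
by rewrite mulrCA -rmorphM /= divff // mulr1.
Qed.

End Inv.
End Omega.

Lemma det_col_dvd (F : fieldType) (n : nat) (A : 'M[{mpoly F[n]}]_n)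
  (d : {mpoly F[n]}) (b : nat) : (b <= n)%N ->
  (forall k (j : 'I_n), (j < b)%N -> mdvd d (A k j)) -> mdvd (d ^+ b) (\det A).
Proof.
move=> hb h.
have : forall kj : 'I_n * 'I_n, exists r : {mpoly F[n]},
    (kj.2 < b)%N -> A kj.1 kj.2 = r * d.
  move=> [k j] /=; case: (ltnP j b) => hj.
    by have [r hr] := h k j hj; exists r.
  by exists 0.
case/fin_all_exists => r hr.
set A' := \matrix_(k, j) if (j < b)%N then r (k, j) else A k j.
set D := \row_(j < n) (if (j < b)%N then d else 1).
have eA : A = A' *m diag_mx D.
  rewrite mul_mx_diag; apply/matrixP => k j; rewrite !mxE; case: ifP => hj.
    by rewrite (hr (k, j)).
  by rewrite mulr1.
exists (\det A'); rewrite eA det_mulmx det_diag; congr (_ * _).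
rewrite (eq_bigr (fun i : 'I_n => if (i < b)%N then d else 1)) => [|i _]; last by rewrite mxE.
rewrite -(big_mkord xpredT (fun i => if (i < b)%N then d else 1)).
rewrite (big_cat_nat _ (n := b)) //= [X in _ * X]big1_seq ?mulr1.
  rewrite big_nat_cond (eq_bigr (fun _ => d)).
    by rewrite -big_nat_cond prodr_const_nat subn0.
  by move=> i /andP [/andP [_ ->]].
by move=> i /andP [_]; rewrite mem_index_iota => /andP [hi _]; rewrite ltnNge hi.
Qed.

Lemma card_seq_undup (T : finType) (s : seq T) : #|s| = size (undup s).
Proof.
rewrite -(eq_card (mem_undup s)); apply/card_uniqP; exact: undup_uniq.
Qed.

Lemma size_undup_map (T T1 T2 : eqType) (s : seq T) (f : T -> T1) (g : T -> T2) :
  {in s &, forall x y, (f x == f y) = (g x == g y)} ->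
  size (undup (map f s)) = size (undup (map g s)).
Proof.
elim: s => [|x s ih] //= h.
have ih' := ih (fun a b ha hb => h a b (mem_behead (s := x :: s) ha) (mem_behead (s := x :: s) hb)).
have e : (f x \in map f s) = (g x \in map g s).
  apply/mapP/mapP => [[y hy /eqP]|[y hy /eqP]].
    by rewrite h ?inE ?hy ?eqxx ?orbT // => /eqP ->; exists y.
  by rewrite -h ?inE ?hy ?eqxx ?orbT // => /eqP ->; exists y.
by rewrite e; case: (g x \in map g s) => //=; rewrite ih'.
Qed.

Lemma prod_const_seq (R : comNzRingType) (T : Type) (s : seq T) (x : R) :
  \prod_(i <- s) x = x ^+ size s.
Proof. by elim: s => [|a s ih]; rewrite ?big_nil ?expr0 // big_cons ih exprS. Qed.

Section Group.
Variables (F : fieldType) (n : nat) (gT : finGroupType) (G : {group gT})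
  (rG : mx_representation F G n) (H : 'M[F]_n) (u : 'cV[F]_n).
Hypothesis hu : (kermx u == H)%MS.
Local Notation GH := (ptstab rG H).
Local Notation KH := (ptstab_det1 rG H).

Lemma GH_P g : reflect (g \in G /\ H *m rG g = H) (g \in GH).
Proof. by rewrite inE; apply: (iffP andP) => [[a /eqP b]|[a ->]]. Qed.

Lemma GH_G g : g \in GH -> g \in G. Proof. by case/GH_P. Qed.

Lemma GH_unit g : g \in GH -> rG g \in unitmx.
Proof. by move/GH_G; apply: repr_mx_unit. Qed.

Lemma GH_ker g : g \in GH -> (kermx u <= kermx (rG g - 1%:M))%MS.
Proof.
case/GH_P => _ hg; case/andP: hu => h1 _; apply: submx_trans h1 _.
by apply/sub_kermxP; rewrite mulmxBr mulmx1 hg subrr.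
Qed.

Lemma GH_mul g h : g \in GH -> h \in GH -> (g * h)%g \in GH.
Proof.
case/GH_P => gG hg; case/GH_P => hG hh; apply/GH_P; split; first exact: groupM.
by rewrite repr_mxM // mulmxA hg hh.
Qed.

Lemma GH_inv g : g \in GH -> (g^-1)%g \in GH.
Proof.
move=> hgg; have := GH_unit hgg; case/GH_P: hgg => gG hg hU; apply/GH_P.
split; first by rewrite groupV.
by rewrite repr_mxV // -{1}hg mulmxK.
Qed.

Lemma det_nz g : g \in GH -> \det (rG g) != 0.
Proof. by move/GH_unit; rewrite unitmxE unitfE. Qed.

Lemma rcosetKH x : x \in GH ->
  (KH :* x)%g = [set z in GH | \det (rG z) == \det (rG x)].
Proof.
move=> hx; apply/setP => z; rewrite mem_rcoset /ptstab_det1 in_set [RHS]in_set.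
have xG := GH_G hx; have hxi := GH_inv hx.
have e : ((z * x^-1)%g \in GH) = (z \in GH).
  apply/idP/idP => h; last exact: GH_mul.
  by have := GH_mul h hx; rewrite -mulgA mulVg mulg1.
rewrite e; apply: andb_id2l => h.
have zG := GH_G h.
rewrite repr_mxM // ?groupV // repr_mxV // det_mulmx det_inv.
have := det_nz hx; set a := \det (rG x); set c := \det (rG z) => anz.
apply/eqP/eqP => [h1|->]; last by rewrite divff.
by rewrite -[c]mulr1 -(mulVf anz) mulrA h1 mul1r.
Qed.

Definition dets := undup [seq \det (rG g) | g <- enum GH].

Lemma size_dets : size dets = e_H rG H.
Proof.
rewrite /e_H /indexg /rcosets imset_card card_seq_undup /dets.
apply: size_undup_map => x y; rewrite !mem_enum => hx hy.
rewrite /= !rcosetE !rcosetKH //; apply/eqP/eqP => [->|h] //.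
have : y \in [set z in GH | \det (rG z) == \det (rG x)] by rewrite h inE hy eqxx.
by rewrite inE => /andP [_ /eqP].
Qed.

Lemma mem_dets c : (c \in dets) = [exists g in GH, c == \det (rG g)].
Proof.
rewrite /dets mem_undup; apply/mapP/existsP => [[g hg ->]|[g /andP [hg /eqP ->]]].
  by exists g; rewrite -mem_enum hg eqxx.
by exists g; rewrite ?mem_enum.
Qed.

Lemma dets_exp c : c \in dets -> c ^+ size dets = 1.
Proof.
rewrite mem_dets => /existsP [g /andP [hg /eqP ->]].
set x := \det (rG g); have xnz : x != 0 by apply: det_nz.
have hs : uniq (map (fun y => x * y) dets).
  by rewrite map_inj_uniq ?undup_uniq //; apply: mulfI.
have hsub : {subset map (fun y => x * y) dets <= dets}.
  move=> y /mapP [z]; rewrite mem_dets => /existsP [h /andP [hh /eqP ->]] ->.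
  rewrite mem_dets; apply/existsP; exists (g * h)%g; rewrite GH_mul //=.
  by rewrite repr_mxM ?GH_G // det_mulmx.
have [_ heq] := uniq_min_size hs hsub (eq_leq (esym (size_map _ _))).
have hp : perm_eq (map (fun y => x * y) dets) dets.
  by apply: uniq_perm => //; exact: undup_uniq.
have := perm_big _ hp (op := *%R) (x := 1) (P := xpredT) (F := id).
rewrite big_map /= big_split /= prod_const_seq => /eqP.
rewrite -{2}[\prod_(i <- dets) i]mul1r (inj_eq (mulIf _)); first by move/eqP.
rewrite prodf_seq_neq0; apply/allP => y /=; rewrite mem_dets => /existsP [h /andP [hh /eqP ->]].
exact: det_nz.
Qed.

Lemma e_pos : (0 < e_H rG H)%N.
Proof.
rewrite -size_dets; case: dets (mem_dets 1) => // /esym/existsP [].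
exists 1%g; rewrite repr_mx1 det1 eqxx andbT.
by apply/GH_P; split; rewrite ?group1 ?repr_mx1 ?mulmx1.
Qed.

Lemma exists_det m : ~~ (e_H rG H %| m)%N ->
  exists2 g, g \in GH & \det (rG g) ^+ m != 1.
Proof.
move=> hm; apply/exists_inP; apply: contraR hm; rewrite negb_exists_in => /forall_inP h.
have epos := e_pos; rewrite -size_dets in epos *.
set e := size dets.
have hr : forall c, c \in dets -> c ^+ (m %% e) = 1.
  move=> c hc; have := hc; rewrite mem_dets => /existsP [g /andP [hg /eqP hcg]].
  have := h g hg; rewrite negbK -hcg => /eqP.
  by rewrite {1}(divn_eq m e) exprD mulnC exprM dets_exp // expr1n mul1r.
rewrite /dvdn; apply/negPn/negP => hnz.
have hpos : (0 < m %% e)%N by rewrite lt0n.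
have hp : 'X^(m %% e) - 1 != 0 :> {poly F} by rewrite -size_poly_eq0 size_XnsubC.
have hall : all (root ('X^(m %% e) - 1)) dets.
  by apply/allP => c hc; rewrite rootE !hornerE hr ?subrr.
have := max_poly_roots hp hall (undup_uniq _).
by rewrite size_XnsubC // ltnS leqNgt ltn_mod epos.
Qed.

End Group.

Section LocalMain.
Variables (F : fieldType) (n : nat) (gT : finGroupType) (G : {group gT})
  (rG : mx_representation F G n) (H : 'M[F]_n) (u : 'cV[F]_n)
  (omega : 'I_n -> form1 F n).
Hypotheses (hu : (kermx u == H)%MS) (unz : u != 0)
  (hinv : forall k g, g \in G -> act_form (rG g) (omega k) = omega k).
Local Notation GH := (ptstab rG H).
Local Notation l := (lin_poly u).
Local Notation e := (e_H rG H).

Lemma inv_pow p : (forall g, g \in GH -> act_poly (rG g) p = p) ->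
  mdvd l p -> mdvd (l ^+ e) p.
Proof.
move=> hp hl; have epos := e_pos rG H.
have hl1 : mdvd (l ^+ 1) p by rewrite expr1.
apply: (iter_dvd epos _ hl1).
move=> k /andP [k1 k2] hk.
have : ~~ (e %| k)%N.
  by apply/negP => /(dvdn_leq k1); rewrite leqNgt k2.
case/exists_det => g hg hd.
apply: (step (GH_unit hg) (GH_ker hu hg) unz (c := 1)).
- by rewrite scale1r hp.
- exact: hk.
- by rewrite exprVn invr_eq1.
Qed.

Lemma trans_col g i k : g \in GH -> is_transvection (rG g) ->
  mdvd (l ^+ e) (om omega k (row i (rG g - 1%:M))).
Proof.
move=> hg ht; have gG := GH_G hg.
have [w [eM _ _ _]] := local_struct (GH_unit hg) (GH_ker hu hg).
have eM1 : rG g - 1%:M = u *m w by rewrite eM addrC addKr.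
set y := row i (rG g - 1%:M).
have yu : y *m u = 0.
  case/andP: ht => _; rewrite /fixspace => /sub_kermxP; rewrite eM1.
  set a := (w *m u) 0 0.
  have -> : u *m w *m (u *m w) = a *: (u *m w).
    by rewrite mulmxA -(mulmxA u) [w *m u]mx11_scalar mul_mx_scalar scalemxAl.
  move/eqP; rewrite scaler_eq0 => /orP [/eqP a0|/eqP uw0].
    rewrite /y eM1 row_mul -mulmxA [w *m u]mx11_scalar -/a a0.
    by rewrite mul_mx_scalar scale0r.
  by rewrite /y eM1 uw0; apply/matrixP => r c; rewrite !mxE big1 // => q _; rewrite !mxE mul0r.
apply: inv_pow.
  move=> g' hg'; rewrite (om_act (GH_unit hg') (fun k => hinv k (GH_G hg'))).
  have [w' [eM' _ _ _]] := local_struct (GH_unit hg') (GH_ker hu hg').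
  by rewrite eM' mulmxDr mulmx1 mulmxA yu mul0mx addr0.
have -> : y = 'e_i *m rG g - 'e_i by rewrite /y rowE mulmxBr mulmx1.
rewrite omB -(om_act (GH_unit hg) (fun k => hinv k gG)).
exact: act_dvd (GH_unit hg) (GH_ker hu hg) _.
Qed.

Definition Rsp := (\sum_(g in GH | is_transvection (rG g)) (rG g - 1%:M))%MS.

Lemma R_col (y : 'rV[F]_n) k : (y <= Rsp)%MS -> mdvd (l ^+ e) (om omega k y).
Proof.
case/sub_sumsmxP => v ->; rewrite om_sum; apply: mdvd_sum => g /andP [hg ht].
rewrite mulmx_sum_row om_sum; apply: mdvd_sum => i _.
by rewrite omZ; apply/mdvdZ/trans_col.
Qed.


Lemma local_main : mdvd (l ^+ (e * b_H rG H + e.-1)) (wedge_coef omega).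
Proof.
have -> : b_H rG H = \rank Rsp by [].
set b := \rank Rsp.
set E := row_ebase Rsp.
set A := Wmx omega *m (map_mx (@mpolyC n F) E)^T.
have hA : forall k j, A k j = om omega k (row j E).
  move=> k j; rewrite !mxE /om; apply: eq_bigr => i _; rewrite !mxE //.
have hrow : forall j : 'I_n, (j < b)%N -> (row j E <= Rsp)%MS.
  move=> j hj; rewrite -(eq_row_base Rsp).
  have -> : row j E = row (Ordinal hj) (row_base Rsp).
    apply/matrixP => z c; rewrite /row_base /= !mxE (bigD1 j) //= big1 ?addr0.
      by rewrite !mxE eqxx hj mul1r.
    move=> q hq; rewrite !mxE.
    have hqj : (j == q :> nat) = false by apply/negbTE; rewrite eq_sym.
    by rewrite hqj mul0r.
  exact: row_sub.
have hdA : mdvd ((l ^+ e) ^+ b) (\det A).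
  apply: det_col_dvd; first exact: rank_leq_col.
  by move=> k j hj; rewrite hA; apply: R_col; apply: hrow.
have Enz : \det E != 0 by rewrite -unitfE -unitmxE row_ebase_unit.
have dA : \det A = wedge_coef omega * (\det E)%:MP.
  by rewrite det_mulmx det_tr (det_map_mx (@mpolyC n F)).
have hf : mdvd (l ^+ (e * b)) (wedge_coef omega).
  case: hdA => r hr; exists (r * ((\det E)^-1)%:MP).
  have : wedge_coef omega = \det A * ((\det E)^-1)%:MP.
    by rewrite dA -mulrA -rmorphM /= divff // mpolyC1 mulr1.
  by move=> ->; rewrite hr exprM mulrAC.
apply: (iter_dvd (leq_addr _ _) _ hf) => k /andP [k1 k2] hk.
have epos := e_pos rG H.
have : ~~ (e %| k.+1)%N.
  have -> : k.+1 = (e * b + (k - e * b).+1)%N by rewrite addnS subnKC.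
  have hj : ((k - e * b).+1 < e)%N.
    move: k1 k2 epos; set x := (e * b)%N; lia.
  by rewrite dvdn_addr ?dvdn_mulr //; apply/negP => /(dvdn_leq (ltn0Sn _)); rewrite leqNgt hj.
case/exists_det => g hg hd.
apply: (step (GH_unit hg) (GH_ker hu hg) unz
          (wedge_semi (GH_unit hg) (fun k => hinv k (GH_G hg))) hk).
apply: contra hd => /eqP h.
have dnz : \det (rG g) != 0 := det_nz hg.
by rewrite exprSr -[X in _ * X]h exprVn mulrV // unitfE expf_neq0.
Qed.

End LocalMain.

Section Final.
Variables (F : fieldType) (n : nat) (gT : finGroupType) (G : {group gT})
  (rG : mx_representation F G n) (l : 'M[F]_n -> 'cV[F]_n).
Hypothesis hl : forall H, H \in hyperplanes rG -> (kermx (l H) == H)%MS.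

Lemma hyp_def H : H \in hyperplanes rG ->
  exists2 g, g \in reflections rG & H = <<fixspace (rG g)>>%MS.
Proof.
by rewrite /hyperplanes mem_undup => /mapP [g]; rewrite mem_enum => hg ->; exists g.
Qed.

Lemma hyp_nz H : H \in hyperplanes rG -> l H != 0.
Proof.
move=> hH; have [g hg eH] := hyp_def hH.
have hr : \rank (rG g - 1%:M) = 1%N.
  by move: hg; rewrite inE => /andP [_ /eqP].
have hn : (1 <= n)%N by rewrite -hr rank_leq_row.
apply/negP => /eqP lz; have := eqmx_rank (hl hH); rewrite lz kermx0 mxrank1.
by rewrite eH genmxE /fixspace mxrank_ker hr; lia.
Qed.

Lemma ker_scale (v : 'cV[F]_n) c : (kermx v <= kermx (c *: v))%MS.
Proof.
apply/sub_kermxP; by rewrite -scalemxAr mulmx_ker scaler0.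
Qed.

Lemma hyp_np H H' : H \in hyperplanes rG -> H' \in hyperplanes rG -> H != H' ->
  forall c, l H' != c *: l H.
Proof.
move=> hH hH' hne c; apply/negP => /eqP e.
have cnz : c != 0 by apply: contraNneq (hyp_nz hH') => c0; rewrite e c0 scale0r.
have e' : l H = c^-1 *: l H' by rewrite e scalerA mulVf // scale1r.
have s1 : (H <= H')%MS.
  case/andP: (hl hH) => _ h1; case/andP: (hl hH') => h2 _.
  apply: submx_trans h1 _; apply: submx_trans _ h2; rewrite e; exact: ker_scale.
have s2 : (H' <= H)%MS.
  case/andP: (hl hH') => _ h1; case/andP: (hl hH) => h2 _.
  apply: submx_trans h1 _; apply: submx_trans _ h2; rewrite e'; exact: ker_scale.
have [g _ eH] := hyp_def hH; have [g' _ eH'] := hyp_def hH'.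
have : <<H>>%MS = <<H'>>%MS by apply/genmxP; rewrite s1 s2.
rewrite eH eH' !genmx_id -eH -eH' => eq; by rewrite eq eqxx in hne.
Qed.

End Final.

Set Strict Implicit.
Unset Implicit Arguments.

Theorem lemma4p2 (F : fieldType) (n : nat) (gT : finGroupType)
    (G : {group gT}) (rG : mx_representation F G n)
    (l : 'M[F]_n -> 'cV[F]_n) (omega : 'I_n -> form1 F n) :
  (2 \notin [pchar F])%N ->
  mx_faithful rG ->
  (G :=: <<reflections rG>>)%g ->
  (forall H, H \in hyperplanes rG -> (kermx (l H) == H)%MS) ->
  (forall k g, g \in G -> act_form (rG g) (omega k) = omega k) ->
  mdvd (Q_tA rG l * Q_det rG l) (wedge_coef omega).
Proof.
move=> _ _ _ hl hinv.
have -> : Q_tA rG l * Q_det rG l = \prod_(H <- hyperplanes rG)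
    lin_poly (l H) ^+ (e_H rG H * b_H rG H + (e_H rG H).-1).
  by rewrite /Q_tA /Q_det -big_split /=; apply: eq_bigr => H _; rewrite exprD.
apply: prod_dvd.
- exact: undup_uniq.
- exact: hyp_nz.
- exact: hyp_np.
- move=> H hH; apply: local_main => //; [exact: hl | exact: hyp_nz hl H hH].
Qed.
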